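(* Let $m$ be a positive integer and $a,b\in\mathbb{F}_{2^{3m}}^*$. Put $A=a^{2^{2m}+2^m+1}+1$ and $B=a^{2^{2m}}b^{2^m}+a^{2^{2m}+2^m}b+b^{2^{2m}}$. Then the equation $x^{2^m}+ax+b=0$ (in $x\in\mathbb{F}_{2^{3m}}$): (i) has at most one solution, namely possibly $x=B/A$, when $A\neq 0$; (ii) has exactly $2^m$ solutions when $A=0$ and $B=0$; (iii) has no solutions when $A=0$ and $B\neq 0$. *)

(* Defs.v *)
From HB Require Import structures.
From mathcomp Require Import all_boot all_order all_algebra all_field.
Set Implicit Arguments. Unset Strict Implicit. Unset Printing Implicit Defensive.

(* Main.v *)
Require Import Defs.
From HB Require Import structures.
From mathcomp Require Import all_boot all_order all_algebra all_field.
From mathcomp Require Import zify ring.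
Import GRing.Theory.
Local Open Scope ring_scope.

Lemma frob2 (R : comNzRingType) (c2 : 2 \in [pchar R]) k (x y : R) :
  (x + y) ^+ (2 ^ k) = x ^+ (2 ^ k) + y ^+ (2 ^ k).
Proof.
elim: k => [|k IH]; first by rewrite !expr1.
by rewrite expnS mulnC !exprM IH sqrrD mulr2n addrr_pchar2 // addr0.
Qed.

Lemma key (F : fieldType) (c2 : 2 \in [pchar F]) m (a b x : F) :
  (forall y : F, y ^+ (2 ^ (3 * m)) = y) ->
  x ^+ (2 ^ m) + a * x + b = 0 ->
  (a ^+ (2 ^ (2 * m) + 2 ^ m + 1) + 1) * x =
  a ^+ (2 ^ (2 * m)) * b ^+ (2 ^ m) + a ^+ (2 ^ (2 * m) + 2 ^ m) * b
           + b ^+ (2 ^ (2 * m)).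
Proof.
move=> hid h.
have q2E : (2 ^ (2 * m) = 2 ^ m * 2 ^ m)%N by rewrite -expnD; have -> : (2 * m = m + m)%N by lia.
have q3E : (2 ^ (3 * m) = 2 ^ m * 2 ^ m * 2 ^ m)%N by rewrite -!expnD; have -> : (3 * m = m + m + m)%N by lia.
set q := (2 ^ m)%N in q2E q3E h *.
have hx : x ^+ q = a * x + b.
  move/eqP: h; rewrite -addrA addr_eq0 => /eqP ->; by rewrite oppr_pchar2.
have hx2 : x ^+ (q * q) = a ^+ q * (a * x + b) + b ^+ q.
  by rewrite exprM hx frob2 // exprMn hx.
have E : x = (a ^+ q) ^+ q * (a ^+ q * (a * x + b)) + (a ^+ q) ^+ q * b ^+ q + (b ^+ q) ^+ q.
  by rewrite -{1}(hid x) q3E exprM hx2 frob2 // -/q exprMn frob2 // -/q exprMn hx mulrDr.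
rewrite q2E !exprD expr1.
rewrite -!exprM in E.
set u := a ^+ (q * q) in E *; set v := a ^+ q in E *; set w := b ^+ (q * q) in E *.
set z := b ^+ q in E *.
apply/eqP; rewrite -subr_eq0; apply/eqP.
transitivity ((x - (u * (v * (a * x + b)) + u * z + w)) + 2%:R * (u * v * a * x)).
  ring.
by rewrite -E subrr add0r (pcharf0 c2) mul0r.
Qed.
Lemma card_le_roots (F : finFieldType) (p : {poly F}) (P : {pred F}) :
  p != 0 -> (forall x, x \in P -> p.[x] = 0) -> (#|P| < size p)%N.
Proof.
move=> pn0 hP; rewrite cardE; apply: (max_poly_roots pn0 _ (enum_uniq P)).
by apply/allP => x; rewrite mem_enum => /hP; rewrite /root => ->.
Qed.

Theorem lemma6 (F : finFieldType) (m : nat) (hm : (0 < m)%N)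
  (hcard : #|F| = (2 ^ (3 * m))%N) (a b : F) (ha : a != 0) (hb : b != 0) :
  let A := a ^+ (2 ^ (2 * m) + 2 ^ m + 1) + 1 in
  let B := a ^+ (2 ^ (2 * m)) * b ^+ (2 ^ m) + a ^+ (2 ^ (2 * m) + 2 ^ m) * b
           + b ^+ (2 ^ (2 * m)) in
  let S := [set x : F | x ^+ (2 ^ m) + a * x + b == 0] in
  [/\ A != 0 -> S \subset [set B / A],
      A = 0 -> B = 0 -> #|S| = (2 ^ m)%N
    & A = 0 -> B != 0 -> S = set0].
Proof.
move=> A B S.
have c2 : 2 \in [pchar F] by apply: (card_finPcharP hcard).
have hid : forall y : F, y ^+ (2 ^ (3 * m)) = y by move=> y; rewrite -hcard expf_card.
have keyS : forall x, x \in S -> A * x = B by move=> x; rewrite inE => /eqP; exact: key.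
split.
- move=> An0; apply/subsetP => x /keyS hx; rewrite inE; apply/eqP.
  by rewrite -hx mulrC mulKf.
- move=> A0 B0.
  pose q := (2 ^ m)%N.
  pose q2 := (2 ^ (2 * m))%N.
  have q2E : q2 = (q * q)%N by rewrite /q2 /q -expnD; have -> : (2 * m = m + m)%N by lia.
  have q3E : #|F| = (q * q * q)%N by rewrite hcard /q -!expnD; have -> : (3 * m = m + m + m)%N by lia.
  have qge2 : (2 <= q)%N by rewrite /q -{1}(expn1 2); exact: leq_pexp2l.
  pose L := fun x : F => x ^+ q + a * x.
  pose K := [set x | L x == 0].
  pose Im := [set L x | x : F].
  pose Bf := fun c : F => a ^+ q2 * c ^+ q + a ^+ (q2 + q) * c + c ^+ q2.
  pose KB := [set c | Bf c == 0].
  have LD : forall x y, L (x + y) = L x + L y.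
    by move=> x y; rewrite /L frob2 // mulrDr addrACA.
  have Lsol : forall x c, (x ^+ q + a * x + c == 0) = (L x == c).
    by move=> x c; rewrite addr_eq0 oppr_pchar2.
  have fib : forall x0, #|[set x | L x == L x0]| = #|K|.
    move=> x0; rewrite -(card_imset K (addrI x0)); apply: eq_card => x.
    rewrite inE; apply/eqP/imsetP => [hx | [k]].
      exists (x + x0); last by rewrite addrCA addrr_pchar2 // addr0.
      by rewrite inE LD hx addrr_pchar2.
    by rewrite inE => /eqP hk ->; rewrite LD hk addr0.
  have part : #|F| = (#|Im| * #|K|)%N.
    rewrite -[#|F|]sum1_card (partition_big L (mem Im)) /=; last first.
      by move=> i _; apply: imset_f.
    rewrite -sum_nat_const; apply: eq_bigr => c /imsetP [x0 _ ->].
    rewrite sum1dep_card -(fib x0); apply: eq_card => x; by rewrite !inE.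
  have Kle : (#|K| <= q)%N.
    pose pK : {poly F} := 'X^q + a *: 'X.
    have sK : size pK = q.+1.
      rewrite size_polyDl size_polyXn //.
      by apply: (leq_ltn_trans (size_scale_leq _ _)); rewrite size_polyX ltnS.
    rewrite -ltnS -sK; apply: card_le_roots; first by rewrite -size_poly_eq0 sK.
    by move=> x; rewrite inE => /eqP hx; rewrite /pK !hornerE.
  have KBle : (#|KB| <= q * q)%N.
    pose pB : {poly F} := 'X^q2 + (a ^+ q2 *: 'X^q + a ^+ (q2 + q) *: 'X).
    have sB : size pB = q2.+1.
      rewrite size_polyDl size_polyXn //.
      apply: (leq_ltn_trans (size_polyD _ _)); rewrite gtn_max.
      apply/andP; split; apply: (leq_ltn_trans (size_scale_leq _ _));
        rewrite ?size_polyXn ?size_polyX q2E ltnS; nia.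
    rewrite -q2E -ltnS -sB; apply: card_le_roots; first by rewrite -size_poly_eq0 sB.
    move=> x; rewrite inE => /eqP hx; rewrite /pB !hornerD !hornerZ !hornerXn hornerX -hx /Bf.
    ring.
  have ImKB : Im \subset KB.
    apply/subsetP => c /imsetP [x _ ->]; rewrite inE; apply/eqP.
    have hk := @key _ c2 m a (L x) x hid (_ : x ^+ (2 ^ m) + a * x + L x = 0).
    rewrite -/A A0 mul0r in hk; apply: esym; apply: hk.
    by apply/eqP; rewrite Lsol.
  have ImKBle := subset_leq_card ImKB.
  have hI : (#|Im| <= q * q)%N := leq_trans ImKBle KBle.
  have q0 : (0 < q)%N by apply: leq_trans qge2.
  have Keq : #|K| = q.
    apply/eqP; rewrite eqn_leq Kle /= leqNgt; apply/negP => hk.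
    have : (#|Im| * #|K| < q * q * q)%N.
      apply: (leq_ltn_trans (leq_mul hI (leqnn _))).
      by rewrite ltn_pmul2l // muln_gt0 q0.
    by rewrite -part q3E ltnn.
  have Ieq' : #|Im| = (q * q)%N.
    apply/eqP; rewrite -(eqn_pmul2r q0) -Keq -part q3E Keq //.
  have Ieq : #|Im| = #|KB|.
    by apply/eqP; rewrite eqn_leq ImKBle /= Ieq' KBle.
  have bIm : b \in Im by rewrite ((subset_cardP Ieq ImKB) b) inE; apply/eqP; exact: B0.
  case/imsetP: bIm => x0 _ hb0.
  have -> : S = [set x | L x == L x0].
    by apply/setP => x; rewrite !inE Lsol hb0.
  by rewrite fib Keq.
- move=> A0 Bn0; apply/setP => x; rewrite in_set0; apply/negP => /keyS.
  by rewrite A0 mul0r => /esym/eqP; rewrite (negbTE Bn0).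
Qed.
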